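(* Let $S$ be a regular ordered semigroup and $\mathcal{B}(S)$ its semigroup of bi-ideals. Let $\mathscr{L}_{\mathcal{B}(S)}$ be the Green's $\mathscr{L}$-relation of the semigroup $(\mathcal{B}(S),* )$ and let $\mathscr{L}'$ be the relation on $\mathcal{B}(S)$ given by: $A\,\mathscr{L}'\,B$ iff for each $a\in A$ there is $b\in B$ with $a\,\mathscr{L}_S\,b$ and for each $b\in B$ there is $a\in A$ with $a\,\mathscr{L}_S\,b$. Then $\mathscr{L}_{\mathcal{B}(S)}\subseteq\mathscr{L}'$.
   Context: An ordered semigroup $(S,\cdot,\leq)$ is a semigroup with a compatible partial order. For $A\subseteq S$, $(A]=\{x\in S: x\leq a\text{ for some }a\in A\}$. $S$ is regular if for each $a\in S$ there is $x\in S$ with $a\leq axa$. A nonempty $A\subseteq S$ is a bi-ideal if $ASA\subseteq A$ and $(A]=A$; $\mathcal{B}(S)$ is the set of bi-ideals with operation $A*B=(AB]$. $\mathscr{L}_S$ is the Green's relation on the ordered semigroup $S$: $a\,\mathscr{L}_S\,b$ iff $(a\cup Sa]=(b\cup Sb]$. $\mathscr{L}_{\mathcal{B}(S)}$ is the usual Green's $\mathscr{L}$-relation of the (unordered) semigroup $(\mathcal{B}(S),* )$. *)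

(* Defs.v *)
Record OrderedSemigroup := {
  carrier :> Type;
  mul : carrier -> carrier -> carrier;
  le : carrier -> carrier -> Prop;
  mul_assoc : forall a b c, mul (mul a b) c = mul a (mul b c);
  le_refl : forall a, le a a;
  le_antisym : forall a b, le a b -> le b a -> a = b;
  le_trans : forall a b c, le a b -> le b c -> le a c;
  le_mul_r : forall a b c, le a b -> le (mul a c) (mul b c);
  le_mul_l : forall a b c, le a b -> le (mul c a) (mul c b)
}.

Arguments mul {_}.
Arguments le {_}.

Definition subset (S : OrderedSemigroup) := S -> Prop.

Definition seteq {S : OrderedSemigroup} (A B : subset S) : Prop :=
  forall x, A x <-> B x.

Definition down {S : OrderedSemigroup} (A : subset S) : subset S :=
  fun x => exists a, A a /\ le x a.

Definition regular (S : OrderedSemigroup) : Prop :=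
  forall a : S, exists x : S, le a (mul (mul a x) a).

Definition bi_ideal {S : OrderedSemigroup} (A : subset S) : Prop :=
  (exists a, A a) /\
  (forall a s b, A a -> A b -> A (mul (mul a s) b)) /\
  seteq (down A) A.

Definition bmul {S : OrderedSemigroup} (A B : subset S) : subset S :=
  down (fun x => exists a b, A a /\ B b /\ x = mul a b).

Definition left_principal {S : OrderedSemigroup} (a : S) : subset S :=
  down (fun y => y = a \/ exists s, y = mul s a).

Definition L_S {S : OrderedSemigroup} (a b : S) : Prop :=
  seteq (left_principal a) (left_principal b).

(* Elements of B(S) are
   bi-ideals, identified up to extensional equality.  The principal left ideal
   B(S)^1 * A = {A} ∪ B(S) * A, as a set of bi-ideals: *)
Definition B_left_principal {S : OrderedSemigroup} (A : subset S)
  : subset S -> Prop :=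
  fun C => seteq C A \/ exists X, bi_ideal X /\ seteq C (bmul X A).

Definition L_B {S : OrderedSemigroup} (A B : subset S) : Prop :=
  forall C, bi_ideal C -> (B_left_principal A C <-> B_left_principal B C).

Definition L' {S : OrderedSemigroup} (A B : subset S) : Prop :=
  (forall a, A a -> exists b, B b /\ L_S a b) /\
  (forall b, B b -> exists a, A a /\ L_S a b).

(* Main.v *)
Require Import Defs.

Lemma lp_incl (S : OrderedSemigroup) (a b : S) :
  left_principal b a -> forall z, left_principal a z -> left_principal b z.
Proof.
  intros [y [Hy Hay]] z [y' [Hy' Hzy']].
  destruct Hy' as [-> | [t ->]].
  - exists y. split; [exact Hy | eapply le_trans; eauto].
  - destruct Hy as [-> | [s ->]].
    + exists (mul t b). split; [right; eauto |].
      eapply le_trans; [exact Hzy' | apply le_mul_l; exact Hay].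
    + exists (mul (mul t s) b). split; [right; eauto |].
      rewrite mul_assoc.
      eapply le_trans; [exact Hzy' | apply le_mul_l; exact Hay].
Qed.

Lemma LS_of (S : OrderedSemigroup) (a b : S) :
  left_principal b a -> left_principal a b -> L_S a b.
Proof.
  intros H1 H2 z; split; apply lp_incl; assumption.
Qed.

Lemma LS_refl (S : OrderedSemigroup) (a : S) : L_S a a.
Proof. intro z; tauto. Qed.

Lemma half (S : OrderedSemigroup) (HS : regular S) (A B : subset S)
  (HB : bi_ideal B)
  (H : forall a, A a -> exists s b, B b /\ le a (mul s b)) :
  forall a, A a -> exists b, B b /\ L_S a b.
Proof.
  intros a Ha.
  destruct (H a Ha) as [x [b0 [Hb0 Hle]]].
  destruct (HS a) as [u Hu].
  destruct HB as [_ [HBm HBd]].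
  exists (mul (mul b0 u) a). split.
  - apply HBd. exists (mul (mul b0 (mul (mul u a) (mul u x))) b0).
    split; [apply HBm; assumption |].
    eapply le_trans. apply le_mul_l. exact Hu.
    eapply le_trans. apply le_mul_l. apply le_mul_l. exact Hle.
    repeat rewrite mul_assoc. apply le_refl.
  - apply LS_of.
    + exists (mul x (mul (mul b0 u) a)). split; [right; eauto |].
      eapply le_trans. exact Hu.
      eapply le_trans. apply le_mul_r. apply le_mul_r. exact Hle.
      repeat rewrite mul_assoc. apply le_refl.
    + exists (mul (mul b0 u) a). split; [right; eauto | apply le_refl].
Qed.

Lemma half2 (S : OrderedSemigroup) (HS : regular S) (A B : subset S)
  (HA : bi_ideal A) (HB : bi_ideal B) :
  B_left_principal B A -> forall a, A a -> exists b, B b /\ L_S a b.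
Proof.
  intros [Heq | [X [HX Heq]]].
  - intros a Ha. exists a. split; [apply Heq; exact Ha | apply LS_refl].
  - apply half; auto.
    intros a Ha. apply Heq in Ha.
    destruct Ha as [y [[x0 [b0 [Hx0 [Hb0 ->]]]] Hle]].
    exists x0, b0. auto.
Qed.

Theorem mainTheorem3 (S : OrderedSemigroup) (HS : regular S)
  (A B : subset S) (HA : bi_ideal A) (HB : bi_ideal B) :
  L_B A B -> L' A B.
Proof.
  intros HL. split.
  - apply half2; auto. apply (HL A HA). left. intro; tauto.
  - intros b Hb.
    assert (H : B_left_principal A B) by (apply (HL B HB); left; intro; tauto).
    destruct (half2 S HS B A HB HA H b Hb) as [a [Ha Hab]].
    exists a. split; [exact Ha | intro z; specialize (Hab z); tauto].
Qed.
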